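(* Let $n\ge5$ be odd and $M$ an $n\times n$ HW-matrix. There is no spin$^c$ set for $M$.
   Context: $\mathcal S=\{0,1,2,3\}$ is the Klein four-group ($\mathbb Z_2$-vector space) with $x+x=0$, $1+2=3$, $1+3=2$, $2+3=1$. $\mathcal P_n$ is the power set of $\{1,\dots,n\}$ (addition = symmetric difference, product = intersection); $|U|_2=|U|\bmod 2$; $J_M(U)=\{j:\sum_{i\in U}M_{ij}=1\}$. $M$ is an HW-matrix if it has $1$ on the diagonal and $2$ or $3$ off the diagonal, all column sums are $0$, and $J_M(U)\ne\emptyset$ for all $U\ne\emptyset,\{1,\dots,n\}$. $S\in\mathcal P_n$ is a spin$^c$ set for $M$ if $|(J_M(U)+U)\cap S|_2=\binom{|U|}2\bmod 2$ for all $U\in\mathcal P_n$. *)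

(* Defs.v *)
From HB Require Import structures.
From mathcomp Require Import all_boot all_order all_algebra.
Set Implicit Arguments. Unset Strict Implicit. Unset Printing Implicit Defensive.
Import GRing.Theory.
Local Open Scope ring_scope.

(* The Klein four-group S = {0,1,2,3}, realized as F_2 x F_2 with
   0 = (0,0), 1 = (1,0), 2 = (0,1), 3 = (1,1); so 1+2 = 3, 1+3 = 2, 2+3 = 1. *)
Definition S := ('F_2 * 'F_2)%type.
Definition s0 : S := (0, 0).
Definition s1 : S := (1, 0).
Definition s2 : S := (0, 1).
Definition s3 : S := (1, 1).

Definition JM (n : nat) (M : 'M[S]_n) (U : {set 'I_n}) : {set 'I_n} :=
  [set j | (\sum_(i in U) M i j) == s1].

(* symmetric difference = addition in P_n *)
Definition symdiff (n : nat) (A B : {set 'I_n}) : {set 'I_n} :=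
  (A :\: B) :|: (B :\: A).

Definition HW_matrix (n : nat) (M : 'M[S]_n) : Prop :=
  [/\ (forall i, M i i = s1),
      (forall i j, i != j -> M i j = s2 \/ M i j = s3),
      (forall j, \sum_i M i j = s0) &
      (forall U : {set 'I_n}, U != set0 -> U != setT -> JM M U != set0)].

(* |X|_2 = |X| mod 2 = odd #|X| ; binom(|U|,2) mod 2 = odd 'C(#|U|,2) *)
Definition spinc_set (n : nat) (M : 'M[S]_n) (T : {set 'I_n}) : Prop :=
  forall U : {set 'I_n},
    odd #|symdiff (JM M U) U :&: T| = odd 'C(#|U|, 2).

(* Main.v *)
Require Import Defs.
From mathcomp Require Import all_boot all_order all_algebra zify.
Import GRing.Theory.
Set Implicit Arguments. Unset Strict Implicit. Unset Printing Implicit Defensive.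

Lemma par (I : finType) (P : pred I) :
  odd #|[set x | P x]| = \big[addb/false]_(x : I) P x.
Proof.
rewrite cardsE -sum1_card big_mkcond /=.
rewrite (big_morph odd oddD (erefl : odd 0 = false)).
apply: eq_bigr => x _. have -> : (x \in P) = P x by []. by case: (P x).
Qed.

Lemma par_split (I : finType) (P Q R : pred I) :
  (forall x, P x = Q x (+) R x) ->
  odd #|[set x | P x]| = odd #|[set x | Q x]| (+) odd #|[set x | R x]|.
Proof.
move=> h; rewrite !par -big_split /=; apply: eq_bigr => x _; exact: h.
Qed.

Lemma par_ext (I : finType) (P Q : pred I) :
  (forall x, P x = Q x) -> #|[set x | P x]| = #|[set x | Q x]|.
Proof. by move=> h; apply: eq_card => x; rewrite !inE h. Qed.

Lemma par_pt (I : finType) (a : I) (b : bool) :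
  odd #|[set x | (x == a) && b]| = b.
Proof.
case: b.
  have -> : [set x | (x == a) && true] = [set a] by apply/setP=> x; rewrite !inE andbT.
  by rewrite cards1.
have -> : [set x | (x == a) && false] = set0 by apply/setP=> x; rewrite !inE andbF.
by rewrite cards0.
Qed.

Lemma F2P (x : 'F_2) : x = 0%R \/ x = 1%R.
Proof. case: x => [[|[|//]]] ? /=. left. exact: val_inj. right;  exact: val_inj. Qed.

Lemma F2nat (k : nat) : (k%:R : 'F_2)%R = ((odd k)%:R)%R.
Proof. by rewrite -modn2 (Fp_nat_mod (isT : prime 2)). Qed.

Lemma F2b_eq1 (b : bool) : (((b%:R)%R : 'F_2) == 1%R) = b.
Proof. by case: b. Qed.

Lemma F2b_eq0 (b : bool) : (((b%:R)%R : 'F_2) == 0%R) = ~~ b.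
Proof. by case: b. Qed.

Lemma sumS (I : finType) (P : pred I) (F : I -> S) :
  (\sum_(i | P i) F i)%R = ((\sum_(i | P i) (F i).1)%R, (\sum_(i | P i) (F i).2)%R).
Proof.
elim/big_rec3: _ => [//|i [a b] c d _ ->] //.
Qed.

Lemma sumF2 (I : finType) (P : pred I) (p : pred I) :
  (\sum_(i | P i) (((p i)%:R)%R : 'F_2))%R = ((odd #|[set i | P i && p i]|)%:R)%R.
Proof.
rewrite -F2nat cardsE -sum1_card big_mkcondr /= natr_sum.
by apply: eq_bigr => i _; case: (p i).
Qed.

Definition Ab n (M : 'M[S]_n) i j : bool := ((M i j).1 == 1%R).

Lemma Mform n (M : 'M[S]_n) : HW_matrix M ->
  forall i j, M i j = ((((Ab M i j)%:R)%R : 'F_2), (((i != j)%:R)%R : 'F_2)).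
Proof.
case=> Hd Ho _ _ i j; rewrite /Ab.
case: (eqVneq i j) => [<-|ij]; first by rewrite Hd.
by case: (Ho i j ij) => ->.
Qed.

Lemma inJM n (M : 'M[S]_n) : HW_matrix M -> forall U j,
  (j \in JM M U) = ((\sum_(i in U) (((Ab M i j)%:R)%R : 'F_2) == 1)%R &&
                    (\sum_(i in U) ((((i != j))%:R)%R : 'F_2) == 0)%R).
Proof.
move=> hw U j; rewrite /JM inE.
under eq_bigr => i _ do rewrite (Mform hw i j).
by rewrite sumS.
Qed.

Lemma AbD n (M : 'M[S]_n) : HW_matrix M -> forall j, Ab M j j.
Proof. by case=> Hd _ _ _ j; rewrite /Ab Hd. Qed.

Lemma hC n (M : 'M[S]_n) : HW_matrix M ->
  forall j, odd #|[set i | (i != j) && Ab M i j]|.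
Proof.
move=> hw j; have := hw; case=> _ _ Hc _.
have := Hc j; under eq_bigr => i _ do rewrite (Mform hw i j).
rewrite sumS /s0 => /pair_equal_spec [h1 _].
move: h1; rewrite sumF2 => /eqP; rewrite F2b_eq0.
rewrite (@par_split _ _ (fun i => (i == j) && true) (fun i => (i != j) && Ab M i j)).
  by rewrite par_pt; case: (odd _).
move=> x; case: (eqVneq x j) => [->|xj] /=; first by rewrite AbD.
by [].
Qed.

Lemma sum2 (R : nmodType) (I : finType) (i k : I) (F : I -> R) : i != k ->
  (\sum_(y in i |: [set k]) F y = F i + F k)%R.
Proof. by move=> ik; rewrite big_setU1 ?inE // big_set1. Qed.

Lemma sum3 (R : nmodType) (I : finType) (i j k : I) (F : I -> R) :
  i != j -> j != k -> i != k ->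
  (\sum_(y in i |: (j |: [set k])) F y = F i + F j + F k)%R.
Proof.
move=> ij jk ik; rewrite big_setU1 ?inE ?negb_or ?ij ?ik // big_setU1 ?inE //.
by rewrite big_set1 /= addrA.
Qed.

Lemma hTr n (M : 'M[S]_n) : HW_matrix M -> (4 <= n)%N ->
  forall i j k, i != j -> j != k -> i != k ->
  [|| Ab M j i == Ab M k i, Ab M i j == Ab M k j | Ab M i k == Ab M j k].
Proof.
move=> hw n4 i j k ij jk ik; have := hw; case=> _ _ _ Hj.
set U := i |: (j |: [set k]).
have U0 : U != set0 by apply/set0Pn; exists i; rewrite !inE eqxx.
have UT : U != setT.
  apply/negP => /eqP UT; have : #|U| = n by rewrite UT cardsT card_ord.
  move=> h; have : (#|U| <= 3)%N.
    rewrite /U (leq_trans (leq_card_setU _ _)) // cards1.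
    by rewrite (leq_trans (leq_add (leqnn _) (leq_card_setU _ _))) // !cards1.
  by rewrite h => h3; move: (leq_trans n4 h3).
have := Hj U U0 UT => /set0Pn [x].
rewrite (inJM hw) !sum3 //.
have ji : j != i by rewrite eq_sym.
have kj : k != j by rewrite eq_sym.
have ki : k != i by rewrite eq_sym.
case: (eqVneq x i) => [->|xi].
  rewrite AbD // ?ij ?ji ?ik ?ki ?jk ?kj /=.
  by case: (Ab M j i); case: (Ab M k i).
case: (eqVneq x j) => [->|xj].
  rewrite AbD // ?ij ?ji ?ik ?ki ?jk ?kj /=.
  by case: (Ab M i j); case: (Ab M k j); rewrite ?orbT.
case: (eqVneq x k) => [->|xk].
  rewrite AbD // ?ij ?ji ?ik ?ki ?jk ?kj /=.
  by case: (Ab M i k); case: (Ab M j k); rewrite ?orbT.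
have ix : i != x by rewrite eq_sym.
have jx : j != x by rewrite eq_sym.
have kx : k != x by rewrite eq_sym.
by rewrite ?ix ?jx ?kx andbF.
Qed.

Definition lam n (M : 'M[S]_n) (T : {set 'I_n}) i : bool :=
  odd #|[set x | [&& x \in T, x != i & Ab M i x]]| (+) (i \in T).

Lemma hR n (M : 'M[S]_n) T : HW_matrix M -> spinc_set M T -> forall i k, i != k ->
  lam M T i (+) lam M T k (+) ((k \in T) && Ab M i k) (+) ((i \in T) && Ab M k i) = true.
Proof.
move=> hw sp i k ik; have := sp (i |: [set k]).
have ki : k != i by rewrite eq_sym.
rewrite cardsU1 inE ik cards1 /=.
pose Bp y x := [&& x \in T, x != i, x != k & Ab M y x].
have eX : #|symdiff (JM M (i |: [set k])) (i |: [set k]) :&: T| =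
   #|[set x | ((x == i) && (i \in T)) (+) ((x == k) && (k \in T)) (+) Bp i x (+) Bp k x]|.
  apply: eq_card => x; rewrite /symdiff !(in_setU, in_setD, in_setI) !(inJM hw) !sum2 // !inE.
  case: (eqVneq x i) => [->|xi].
    rewrite /Bp ?(negbTE ik) ?(negbTE ki) ?ik ?ki eqxx !andbF /=.
    by case: (i \in T); case: (Ab M i i); case: (Ab M k i).
  case: (eqVneq x k) => [->|xk].
    rewrite /Bp ?(negbTE ik) ?(negbTE ki) ?ik ?ki eqxx !andbF /=.
    by case: (k \in T); case: (Ab M i k); case: (Ab M k k).
  have ix : i != x by rewrite eq_sym.
  have kx : k != x by rewrite eq_sym.
  rewrite /Bp ?ix ?kx ?xi ?xk /=.
  by case: (Ab M i x); case: (Ab M k x); case: (x \in T).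
rewrite eX.
rewrite (@par_split _ _ (fun x => ((x == i) && (i \in T)) (+) ((x == k) && (k \in T)) (+) Bp i x) (Bp k)) //.
rewrite (@par_split _ _ (fun x => ((x == i) && (i \in T)) (+) ((x == k) && (k \in T))) (Bp i)) //.
rewrite (@par_split _ _ (fun x => ((x == i) && (i \in T))) (fun x => ((x == k) && (k \in T)))) //.
rewrite !par_pt.
have eI : forall y z, y != z -> odd #|[set x | [&& x \in T, x != y & Ab M y x]]| =
     odd #|[set x | [&& x \in T, x != y, x != z & Ab M y x]]| (+) ((z \in T) && Ab M y z).
  move=> y z yz.
  rewrite (@par_split _ _ (fun x => [&& x \in T, x != y, x != z & Ab M y x]) (fun x => (x == z) && ((z \in T) && Ab M y z))).
    by rewrite par_pt.
  have zy : z != y by rewrite eq_sym.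
  move=> x; case: (eqVneq x z) => [->|xz].
    by rewrite zy /= !andbF; case: (z \in T); case: (Ab M y z).
  by rewrite /= addbF.
rewrite /lam (eI i k ik) (eI k i ki).
have -> : [set x | [&& x \in T, x != k, x != i & Ab M k x]] = [set x | Bp k x].
  by apply/setP => x; rewrite !inE /Bp; case: (x != i); case: (x != k); rewrite ?andbF.
rewrite -/(Bp i) /=.
by case: (odd _); case: (odd _); case: (i \in T); case: (k \in T); case: (Ab M i k); case: (Ab M k i).
Qed.

Lemma C1 (auv avu auw awu avw awv lu lv lw : bool) :
   lu (+) lv (+) auv (+) avu -> lu (+) lw (+) auw (+) awu -> lv (+) lw (+) avw (+) awv ->
   [|| avu == awu, auv == awv | auw == avw] -> lu = lv -> auv -> awu -> awv.
Proof. by case: auv; case: avu; case: auw; case: awu; case: avw; case: awv; case: lu; case: lv; case: lw. Qed.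

Lemma C2 (auv avu auw awu avw awv lu lv lw : bool) :
   lu (+) lv (+) auv (+) avu -> lu (+) lw (+) auw (+) awu -> lv (+) lw (+) avw (+) awv ->
   [|| avu == awu, auv == awv | auw == avw] -> lu = false -> lv = true -> auv -> awu || awv.
Proof. by case: auv; case: avu; case: auw; case: awu; case: avw; case: awv; case: lu; case: lv; case: lw. Qed.

Lemma C3 (auv avu auw awu avw awv lu lv lw : bool) :
   lu (+) lv (+) auv (+) avu -> lu (+) lw (+) auw (+) awu -> lv (+) lw (+) avw (+) awv ->
   [|| avu == awu, auv == awv | auw == avw] -> lu = false -> lv = true -> ~~ auv -> ~~ (awu && awv).
Proof. by case: auv; case: avu; case: auw; case: awu; case: avw; case: awv; case: lu; case: lv; case: lw. Qed.

Lemma ar_lt (m x : nat) (b : bool) : 0 < m -> x <= m.-1 -> (if b then m.-1 - x else x) < m.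
Proof. case: b; lia. Qed.
Lemma ar_ne1 m x y : 0 < m -> y <= m.-1 -> m <= x + y -> x != m.-1 - y.
Proof. move=> h0 h1 h2; apply/eqP; lia. Qed.
Lemma ar_ne2 m x y : 2 <= m -> y <= m.-1 -> x + y <= m - 2 -> x != m.-1 - y.
Proof. move=> h0 h1 h2; apply/eqP; lia. Qed.
Lemma ar_lt1 m x y : x < y -> y <= m.-1 -> (m.-1 - x = m.-1 - y) -> False.
Proof. lia. Qed.
Lemma ar_lt2 x y : x < y -> x = y -> False.
Proof. lia. Qed.
Lemma ar_m2 c : (1 + (1 + c)) - 2 = c.
Proof. lia. Qed.

Lemma core n (T : {set 'I_n}) (A : 'I_n -> 'I_n -> bool) (l : 'I_n -> bool) :
  odd n -> (5 <= n)%N ->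
  (forall i k, i != k -> l i (+) l k (+) ((k \in T) && A i k) (+) ((i \in T) && A k i) = true) ->
  (forall i j k, i != j -> j != k -> i != k -> [|| A j i == A k i, A i j == A k j | A i k == A j k]) ->
  (forall j, odd #|[set i | (i != j) && A i j]|) ->
  False.
Proof.
move=> hodd n5 hR hTr hC.
have hZ : #|~: T| <= 2.
  have inj : {in ~: T &, injective l}.
    move=> z z'; rewrite !inE => hz hz' e; apply/eqP/negP => /negP zz'.
    by have := hR z z' zz'; rewrite (negbTE hz) (negbTE hz') e addbb.
  by rewrite -(card_in_imset inj) (leq_trans (max_card _)) // card_bool.
set m := #|T|.
have hm : m + #|~: T| = n by rewrite cardsC card_ord.
have m3 : 3 <= m by lia.
pose InS v := [set w | [&& w \in T, w != v & A w v]].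
have InS_le : forall v, v \in T -> #|InS v| <= m.-1.
  move=> v hv; rewrite [m](cardsD1 v) hv /=.
  apply: subset_leq_card; apply/subsetP => w; rewrite !inE => /and3P [-> -> _].
  by [].
have Rt : forall u v, u \in T -> v \in T -> u != v -> l u (+) l v (+) A u v (+) A v u.
  by move=> u v hu hv uv; have := hR u v uv; rewrite hu hv.
have sub_same : forall u v, u \in T -> v \in T -> u != v -> l u = l v -> A u v ->
    #|InS u| < #|InS v|.
  move=> u v hu hv uv luv auv; apply: proper_card; apply/properP; split.
    apply/subsetP => w; rewrite !inE => /and3P [hw wu awu].
    have wv : w != v.
      apply/negP => /eqP wv; move: awu; rewrite wv => avu.
      by have := Rt u v hu hv uv; rewrite luv addbb auv avu.
    rewrite hw wv /=.
    have vw : v != w by rewrite eq_sym.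
    have uw : u != w by rewrite eq_sym.
    exact: (C1 (Rt u v hu hv uv) (Rt u w hu hw uw) (Rt v w hv hw vw) (hTr u v w uv vw uw) luv auv awu).
  by exists u; rewrite !inE ?hu ?uv ?auv ?eqxx.
have mixed1 : forall u v, u \in T -> v \in T -> u != v -> l u = false -> l v = true -> A u v ->
    m <= #|InS u| + #|InS v|.
  move=> u v hu hv uv lu lv auv.
  have avu : A v u by have := Rt u v hu hv uv; rewrite lu lv auv; case: (A v u).
  apply: leq_trans (leq_card_setU _ _); apply: subset_leq_card; apply/subsetP => w hw.
  have vu : v != u by rewrite eq_sym.
  case: (eqVneq w u) => [->|wu]; first by rewrite !inE hu uv auv orbT.
  case: (eqVneq w v) => [->|wv]; first by rewrite !inE hv vu avu.
  have uw : u != w by rewrite eq_sym.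
  have vw : v != w by rewrite eq_sym.
  have := C2 (Rt u v hu hv uv) (Rt u w hu hw uw) (Rt v w hv hw vw) (hTr u v w uv vw uw) lu lv auv.
  by rewrite !inE hw wu wv.
have mixed2 : forall u v, u \in T -> v \in T -> u != v -> l u = false -> l v = true -> ~~ A u v ->
    #|InS u| + #|InS v| <= m - 2.
  move=> u v hu hv uv lu lv nauv.
  have navu : ~~ A v u by have := Rt u v hu hv uv; rewrite lu lv (negbTE nauv); case: (A v u).
  have vu : v != u by rewrite eq_sym.
  have disj : InS u :&: InS v = set0.
    apply/setP => w; rewrite !inE.
    apply/negP => /andP [/and3P [hw wu awu] /and3P [_ wv awv]].
    have uw : u != w by rewrite eq_sym.
    have vw : v != w by rewrite eq_sym.
    have := C3 (Rt u v hu hv uv) (Rt u w hu hw uw) (Rt v w hv hw vw) (hTr u v w uv vw uw) lu lv nauv.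
    by rewrite awu awv.
  have := cardsUI (InS u) (InS v); rewrite disj cards0 addn0 => <-.
  have -> : m - 2 = #|(T :\ u) :\ v|.
    rewrite /m (cardsD1 u T) hu (cardsD1 v (T :\ u)) !inE vu hv /=; exact: ar_m2.
  apply: subset_leq_card; apply/subsetP => w; rewrite !inE.
  case/orP => /and3P [-> wx ax]; rewrite ?andbT.
    rewrite wx andbT; apply/negP => /eqP e; move: ax; rewrite e.
    by rewrite (negbTE navu).
  rewrite wx /=; apply/negP => /eqP e; move: ax; rewrite e.
  by rewrite (negbTE nauv).
pose K b := odd #|[set z | (z \notin T) && (l z == b)]|.
have par_In : forall v, v \in T -> odd #|InS v| = true (+) K (l v).
  move=> v hv; have := hC v.
  rewrite (@par_split _ _ (fun i => [&& i \in T, i != v & A i v]) (fun i => (i \notin T) && (l i == l v))).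
    by rewrite /K; case: (odd _); case: (odd _).
  move=> i; case hi: (i \in T) => /=; first by rewrite addbF.
  have iv : i != v by apply/negP => /eqP e; move: hi; rewrite e hv.
  have := hR i v iv; rewrite hi hv iv /=.
  by case: (l i); case: (l v); case: (A i v).
have KZ : K true (+) K false = odd #|~: T|.
  rewrite /K -(@par_split _ (fun z => z \notin T)) ?setCE //.
    by move=> z; case: (z \in T); case: (l z).
pose f v := if l v then m.-1 - #|InS v| else #|InS v|.
have par_f : forall v, v \in T -> odd (f v) = true (+) odd #|~: T| (+) K true.
  have om : odd m.-1 = odd #|~: T|.
    have m0 : 0 < m := leq_trans (isT : 1 <= 3) m3.
    have e : odd m = ~~ odd m.-1 by rewrite -{1}(prednK m0).
    have h2 : odd (m + #|~: T|) by rewrite hm.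
    by move: h2; rewrite oddD e; case: (odd _); case: (odd _).
  move=> v hv; rewrite /f; case lv: (l v).
    by rewrite oddB ?InS_le // par_In // lv om; case: (odd _); case: (K _).
  by rewrite par_In // lv -KZ; case: (K _); case: (K _).
have f_lt : forall v, v \in T -> f v < m.
  move=> v hv; rewrite /f; apply: ar_lt; [exact: (leq_trans (isT : 1 <= 3) m3) | exact: InS_le].
have f_ne : forall u v, u \in T -> v \in T -> u != v -> l u = false -> l v = true -> f u != f v.
  move=> u v hu hv uv lu lv; rewrite /f lu lv.
  have := InS_le v hv; case auv: (A u v).
    by move=> h; apply: ar_ne1 (leq_trans (isT : 1 <= 3) m3) h (mixed1 u v hu hv uv lu lv auv).
  by move=> h; apply: ar_ne2 h (mixed2 u v hu hv uv lu lv (negbT auv)); exact: (leq_trans (isT : 2 <= 3) m3).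
have finj : {in T &, injective f}.
  move=> u v hu hv e; apply/eqP/negP => /negP uv.
  case lu: (l u); case lv: (l v).
  - have := Rt u v hu hv uv; rewrite lu lv /= => hA.
    have hu' := InS_le u hu; have hv' := InS_le v hv.
    move: e; rewrite /f lu lv; case auv: (A u v).
      by apply: ar_lt1 (sub_same u v hu hv uv (etrans lu (esym lv)) auv) hv'.
    have vu : v != u by rewrite eq_sym.
    have avu : A v u by move: hA; rewrite auv; case: (A v u).
    by move=> e; apply: ar_lt1 (sub_same v u hv hu vu (etrans lv (esym lu)) avu) hu' (esym e).
  - have vu : v != u by rewrite eq_sym.
    by move: (f_ne v u hv hu vu lv lu); rewrite e eqxx.
  - by move: (f_ne u v hu hv uv lu lv); rewrite e eqxx.
  - move: e; rewrite /f lu lv; case auv: (A u v).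
      by apply: ar_lt2 (sub_same u v hu hv uv (etrans lu (esym lv)) auv).
    have vu : v != u by rewrite eq_sym.
    have avu : A v u by have := Rt u v hu hv uv; rewrite lu lv auv /=; case: (A v u).
    by move=> e; apply: ar_lt2 (sub_same v u hv hu vu (etrans lv (esym lu)) avu) (esym e).
pose g v : 'I_m.+1 := inord (f v).
have gval : forall v, v \in T -> val (g v) = f v.
  by move=> v hv; rewrite /g /= inordK // ltnS ltnW // f_lt.
have ginj : {in T &, injective g}.
  by move=> u v hu hv e; apply: finj => //; rewrite -(gval u hu) -(gval v hv) e.
have gim : g @: T = [set~ ord_max].
  apply/eqP; rewrite eqEcard; apply/andP; split.
    apply/subsetP => y /imsetP [v hv ->]; rewrite !inE; apply/eqP => e.
    by have := f_lt v hv; rewrite -(gval v hv) e /= ltnn.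
  by rewrite cardsC1 card_ord card_in_imset.
have hit : forall k, k < m -> exists2 v, v \in T & f v = k.
  move=> k km; have km1 : k < m.+1 by apply: ltnW.
  have : (inord k : 'I_m.+1) \in [set~ ord_max].
    rewrite !inE; apply/eqP => /(congr1 val); rewrite /= (inordK km1) => e.
    by move: km; rewrite e ltnn.
  rewrite -gim => /imsetP [v hv e]; exists v => //.
  by rewrite -(gval v hv) -e /= (inordK km1).
have [v0 h0 e0] := hit 0 (leq_trans (isT : 1 <= 3) m3).
have [v1 h1 e1] := hit 1 (leq_trans (isT : 2 <= 3) m3).
by have := par_f v0 h0; rewrite -(par_f v1 h1) e0 e1.
Qed.


Theorem mainTheorem18 (n : nat) (M : 'M[S]_n) :
  (5 <= n)%N -> odd n -> HW_matrix M -> ~ (exists T : {set 'I_n}, spinc_set M T).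
Proof.
move=> n5 hodd hw [T sp].
apply: (@core n T (Ab M) (lam M T) hodd n5).
- exact: hR hw sp.
- exact: hTr hw (ltnW n5).
- exact: hC hw.
Qed.
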